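(* Let $\Sigma$ be a finite group, $A$ a pseudofield, and $\overline A=\operatorname{Fun}L$ with $A\subseteq\overline A$ via the Taylor homomorphism, where $L$ is an algebraic closure of $A/\mathfrak m$ for a maximal ideal $\mathfrak m$ of $A$. If $B$ is a difference closed pseudofield containing $A$ (i.e. with an injective difference homomorphism $A\to B$), then there exists a difference embedding $\overline A\to B$ whose restriction to $A$ is the given embedding $A\to B$.
   Context: A difference ring is a commutative ring with identity with an action of the group $\Sigma$ by ring automorphisms; a difference homomorphism is a unital ring homomorphism commuting with the actions. A pseudofield is an absolutely flat difference ring with no $\Sigma$-stable ideals other than $0$ and itself. $\operatorname{Fun}L$ is the ring of functions $\Sigma\to L$ with pointwise operations and $(\sigma f)(\tau)=f(\sigma^{-1}\tau)$. The Taylor homomorphism of a ring homomorphism $\varphi\colon A\to L$ (here $A\to A/\mathfrak m\to L$) is the difference homomorphism $\Phi\colon A\to\operatorname{Fun}L$, $\Phi(a)(\tau)=\varphi(\tau^{-1}a)$; it is injective here. A pseudofield $A$ is difference closed if for every $n$ and every $\Sigma$-stable ideal $\mathfrak a$ of the difference polynomial ring $A\{y_1,\dots,y_n\}$ (polynomial ring in indeterminates $\sigma y_i$, $\tau(\sigma y_i)=(\tau\sigma)y_i$) the radical of $\mathfrak a$ equals the set of difference polynomials vanishing at every common zero of $\mathfrak a$ in $A^n$ (evaluation via $\sigma y_i\mapsto\sigma(a_i)$). *)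

(* Defs.v *)
From HB Require Import structures.
From mathcomp Require Import all_boot all_order all_algebra all_fingroup.
Set Implicit Arguments. Unset Strict Implicit. Unset Printing Implicit Defensive.
Import GRing.Theory.
Local Open Scope ring_scope.

Section Defs.
Variable gT : finGroupType.

Definition diff_action (R : comNzRingType) (act : gT -> R -> R) : Prop :=
  [/\ forall g, act g 1 = 1,
      forall g x y, act g (x + y) = act g x + act g y,
      forall g x y, act g (x * y) = act g x * act g y &
      forall g, bijective (act g)] /\
  (forall x, act 1%g x = x) /\
  (forall g h x, act (g * h)%g x = act g (act h x)).

Definition ring_ideal (R : comNzRingType) (I : R -> Prop) : Prop :=
  [/\ I 0, forall x y, I x -> I y -> I (x + y) & forall r x, I x -> I (r * x)].

Definition stable_ideal (R : comNzRingType) (act : gT -> R -> R) (I : R -> Prop) :=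
  forall g x, I x -> I (act g x).

Definition maximal_ideal (R : comNzRingType) (I : R -> Prop) : Prop :=
  [/\ ring_ideal I, ~ I 1 &
      forall J, ring_ideal J -> (forall x, I x -> J x) ->
        (forall x, J x -> I x) \/ (forall x, J x)].

Definition absolutely_flat (R : comNzRingType) : Prop :=
  forall a : R, exists b, a = a * a * b.

Definition pseudofield (R : comNzRingType) (act : gT -> R -> R) : Prop :=
  [/\ diff_action act, absolutely_flat R &
      forall I, ring_ideal I -> stable_ideal act I ->
        (forall x, I x -> x = 0) \/ (forall x, I x)].

(* variable (i, sigma) stands for sigma y_i *)
Definition dvar (n : nat) := ('I_n * gT)%type.
Definition dmonom (n : nat) := {ffun dvar n -> nat}.
(* a polynomial is represented by a finite formal sum of terms c * monomial;
   two representations denote the same polynomial iff they have the same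
   coefficients (dcoef). *)
Definition dpoly (R : comNzRingType) (n : nat) := seq (R * dmonom n).

Definition dcoef (R : comNzRingType) n (p : dpoly R n) (m : dmonom n) : R :=
  \sum_(t <- (p : seq (R * dmonom n)) | t.2 == m) t.1.

Definition dadd (R : comNzRingType) n (p q : dpoly R n) : dpoly R n := p ++ q.
Definition dmul (R : comNzRingType) n (p q : dpoly R n) : dpoly R n :=
  [seq (t.1 * u.1, [ffun x => (t.2 x + u.2 x)%N] : dmonom n)
     | t : R * dmonom n <- p, u : R * dmonom n <- q].
Definition done_ (R : comNzRingType) n : dpoly R n := [:: (1, [ffun => 0%N] : dmonom n)].
Definition dpow (R : comNzRingType) n (p : dpoly R n) (k : nat) : dpoly R n :=
  iter k (dmul p) (done_ R n).

(* action: tau (c * prod (sigma y_i)^e) = tau(c) * prod ((tau sigma) y_i)^e *)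
Definition dact (R : comNzRingType) (act : gT -> R -> R) n (tau : gT)
    (p : dpoly R n) : dpoly R n :=
  [seq (act tau t.1, [ffun x : dvar n => t.2 (x.1, (tau^-1 * x.2)%g)] : dmonom n)
     | t : R * dmonom n <- p].

Definition deval (R : comNzRingType) (act : gT -> R -> R) n (a : 'I_n -> R)
    (p : dpoly R n) : R :=
  \sum_(t <- (p : seq (R * dmonom n))) t.1 * \prod_(x : dvar n) act x.2 (a x.1) ^+ t.2 x.

Definition dpoly_ideal (R : comNzRingType) n (P : dpoly R n -> Prop) : Prop :=
  [/\ forall p q, dcoef p =1 dcoef q -> P p -> P q,
      P [::],
      forall p q, P p -> P q -> P (dadd p q) &
      forall p q, P q -> P (dmul p q)].

Definition dpoly_stable (R : comNzRingType) (act : gT -> R -> R) n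
    (P : dpoly R n -> Prop) : Prop :=
  forall tau p, P p -> P (dact act tau p).

(* difference closed: for every Sigma-stable ideal, rad(a) = I(V(a)) *)
Definition difference_closed (R : comNzRingType) (act : gT -> R -> R) : Prop :=
  forall (n : nat) (P : dpoly R n -> Prop),
    dpoly_ideal P -> dpoly_stable act P ->
    forall p : dpoly R n,
      (exists k, P (dpow p k)) <->
      (forall a : 'I_n -> R, (forall q, P q -> deval act a q = 0) ->
         deval act a p = 0).

Definition funact (L : comNzRingType) (sigma : gT) (f : {ffun gT -> L})
  : {ffun gT -> L} := [ffun tau => f (sigma^-1 * tau)%g].

Definition taylor (A L : comNzRingType) (phi : A -> L) (act : gT -> A -> A)
  (a : A) : {ffun gT -> L} := [ffun tau => phi (act tau^-1%g a)].

End Defs.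

(* Main.v *)
Require Import Defs.
From HB Require Import structures.
From mathcomp Require Import all_boot all_order all_algebra all_fingroup.
From Stdlib Require Import ClassicalEpsilon FunctionalExtensionality PropExtensionality Classical.
Import GRing.Theory.
Local Open Scope ring_scope.

Module ZornM.

Section Zorn.
Variables (X : Type) (R : X -> X -> Prop).
Hypothesis Rrefl : forall x, R x x.
Hypothesis Rtr : forall x y z, R x y -> R y z -> R x z.
Definition chainP (C : X -> Prop) := forall x y, C x -> C y -> R x y \/ R y x.
Hypothesis ub : forall C, chainP C -> exists u, forall x, C x -> R x u.
Hypothesis inh : inhabited X.

Definition sub (A B : X -> Prop) := forall x, A x -> B x.
Definition add1 (A : X -> Prop) z := fun x => A x \/ x = z.
Definition canext A := exists z, ~ A z /\ chainP (add1 A z).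
Definition pick A := epsilon inh (fun z => ~ A z /\ chainP (add1 A z)).
Definition next (A : X -> Prop) : X -> Prop := fun x => A x \/ (canext A /\ x = pick A).
Definition bigU (G : (X -> Prop) -> Prop) : X -> Prop := fun x => exists A, G A /\ A x.
Definition closedF (F : (X -> Prop) -> Prop) :=
  (forall A, F A -> F (next A)) /\ (forall G, (forall A, G A -> F A) -> F (bigU G)).
Definition T A := forall F, closedF F -> F A.

Lemma T_closed : closedF T.
Proof.
split.
- intros A HA F HF. apply (proj1 HF). apply HA; exact HF.
- intros G HG F HF. apply (proj2 HF). intros A HA. apply HG; auto.
Qed.

Lemma sub_next A : sub A (next A).
Proof. intros x Hx; left; exact Hx. Qed.

Lemma next_one A x y : next A x -> ~ A x -> next A y -> ~ A y -> x = y.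
Proof.
intros [H|[_ ->]] nA; [contradiction|]. intros [H|[_ ->]] nB; [contradiction|reflexivity].
Qed.

Lemma ext_eq (A B : X -> Prop) : sub A B -> sub B A -> A = B.
Proof.
intros H1 H2; apply functional_extensionality; intro x;
apply propositional_extensionality; split; auto.
Qed.

Definition comparable C := T C /\ forall A, T A -> sub A C \/ sub C A.

Lemma lemma1 C : comparable C -> forall A, T A -> sub A C \/ sub (next C) A.
Proof.
intros [TC HC].
set (M := fun A => T A /\ (sub A C \/ sub (next C) A)).
assert (HM : closedF M).
{ split.
  - intros A [TA [H|H]].
    + split; [apply (proj1 T_closed); exact TA|].
      destruct (classic (sub C A)) as [HCA|HCA].
      * right. rewrite (ext_eq A C H HCA). intros x Hx; exact Hx.
      * destruct (HC (next A) (proj1 T_closed A TA)) as [H2|H2].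
        -- left; exact H2.
        -- left. apply not_all_ex_not in HCA. destruct HCA as [x Hx].
           apply imply_to_and in Hx. destruct Hx as [Cx nAx].
           intros y Hy. destruct (classic (A y)) as [Ay|nAy]; [apply H; exact Ay|].
           rewrite (next_one A y x Hy nAy (H2 x Cx) nAx). exact Cx.
    + split; [apply (proj1 T_closed); exact TA|].
      right. intros x Hx; apply sub_next; apply H; exact Hx.
  - intros G HG. split.
    + apply (proj2 T_closed). intros A HA; apply (HG A HA).
    + destruct (classic (exists A, G A /\ sub (next C) A)) as [[A [GA HA]]|NE].
      * right. intros x Hx. exists A. split; auto.
      * left. intros x [A [GA Ax]]. destruct (proj2 (HG A GA)) as [H|H].
        -- apply H; exact Ax.
        -- exfalso; apply NE; exists A; auto. }
intros A TA. exact (proj2 (TA M HM)).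
Qed.

Lemma all_comparable : forall A, T A -> comparable A.
Proof.
intros A TA. apply TA. split.
- intros C HC. split; [apply (proj1 T_closed); exact (proj1 HC)|].
  intros B TB. destruct (lemma1 C HC B TB) as [H|H].
  + left. intros x Hx; apply sub_next; apply H; exact Hx.
  + right; exact H.
- intros G HG. split.
  + apply (proj2 T_closed). intros B HB; exact (proj1 (HG B HB)).
  + intros B TB. destruct (classic (forall C, G C -> sub C B)) as [H|H].
    * right. intros x [C [GC Cx]]. apply (H C GC); exact Cx.
    * apply not_all_ex_not in H. destruct H as [C HC].
      apply imply_to_and in HC. destruct HC as [GC nCB].
      destruct (proj2 (HG C GC) B TB) as [H|H]; [|contradiction].
      left. intros x Hx. exists C; split; auto.
Qed.

Lemma T_chain : forall A, T A -> chainP A.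
Proof.
intros A TA. assert (H : T A /\ chainP A).
{ apply TA. split.
  - intros B [TB CB]. split; [apply (proj1 T_closed); exact TB|].
    unfold next. destruct (classic (canext B)) as [Hc|Hc].
    + pose proof (epsilon_spec inh (fun z => ~ B z /\ chainP (add1 B z)) Hc) as [_ Hs].
      fold (pick B) in Hs.
      intros x y Hx Hy. apply Hs.
      * destruct Hx as [Hx|[_ Hx]]; [left; exact Hx|right; exact Hx].
      * destruct Hy as [Hy|[_ Hy]]; [left; exact Hy|right; exact Hy].
    + intros x y [Hx|[Hx _]] [Hy|[Hy _]]; try contradiction. apply CB; auto.
  - intros G HG. split.
    + apply (proj2 T_closed). intros B HB; exact (proj1 (HG B HB)).
    + intros x y [A1 [G1 H1]] [A2 [G2 H2]].
      destruct (proj2 (all_comparable A1 (proj1 (HG A1 G1))) A2 (proj1 (HG A2 G2))) as [S|S].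
      * apply (proj2 (HG A1 G1)); auto.
      * apply (proj2 (HG A2 G2)); auto. }
exact (proj2 H).
Qed.

Theorem zorn : exists m, forall y, R m y -> R y m.
Proof.
apply NNPP; intro Hn.
assert (Hs : forall m, exists y, R m y /\ ~ R y m).
{ intro m. apply NNPP; intro H. apply Hn. exists m. intros y Hy.
  apply NNPP; intro H2. apply H. exists y; auto. }
set (U := bigU T).
assert (TU : T U) by (apply (proj2 T_closed); auto).
assert (CU : chainP U) by (apply T_chain; exact TU).
destruct (ub U CU) as [u Hu].
destruct (Hs u) as [y [Huy Hyu]].
assert (nUy : ~ U y) by (intro H; apply Hyu; apply Hu; exact H).
assert (Hc : canext U).
{ exists y. split; [exact nUy|]. intros a b Ha Hb.
  destruct Ha as [Ha| ->]; destruct Hb as [Hb| ->].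
  - apply CU; auto.
  - left; apply Rtr with u; auto.
  - right; apply Rtr with u; auto.
  - left; apply Rrefl. }
pose proof (epsilon_spec inh (fun z => ~ U z /\ chainP (add1 U z)) Hc) as [Hp _].
fold (pick U) in Hp. apply Hp.
exists (next U). split; [apply (proj1 T_closed); exact TU|]. right; split; auto.
Qed.
End Zorn.

End ZornM.

Set Implicit Arguments. Unset Strict Implicit. Unset Printing Implicit Defensive.

Record actok (gT : finGroupType) (C : comPzRingType) (act : gT -> C -> C) : Prop := ActOk {
  ao1 : forall g, act g 1 = 1;
  aoD : forall g x y, act g (x + y) = act g x + act g y;
  aoM : forall g x y, act g (x * y) = act g x * act g y;
  aoid : forall x, act 1%g x = x;
  aocomp : forall g h x, act (g * h)%g x = act g (act h x) }.

Section Ev.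
Variables (gT : finGroupType) (R : comNzRingType) (C : comPzRingType).
Variables (j : {rmorphism R -> C}) (actC : gT -> C -> C) (n : nat) (a : 'I_n -> C).

Definition mon (m : dmonom gT n) : C := \prod_(x : dvar gT n) actC x.2 (a x.1) ^+ m x.
Definition ev (p : dpoly gT R n) : C := \sum_(t <- p) j t.1 * mon t.2.

Lemma ev_nil : ev [::] = 0. Proof. by rewrite /ev big_nil. Qed.
Lemma ev_cat p q : ev (p ++ q) = ev p + ev q. Proof. by rewrite /ev big_cat. Qed.
Lemma ev_dadd p q : ev (dadd p q) = ev p + ev q. Proof. by rewrite /dadd ev_cat. Qed.
Lemma ev_cons t p : ev (t :: p) = j t.1 * mon t.2 + ev p. Proof. by rewrite /ev big_cons. Qed.

Lemma mon0 : mon [ffun => 0%N] = 1.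
Proof. by rewrite /mon big1 // => x _; rewrite ffunE expr0. Qed.

Lemma monD (m1 m2 : dmonom gT n) : mon [ffun x => (m1 x + m2 x)%N] = mon m1 * mon m2.
Proof. by rewrite /mon -big_split /=; apply: eq_bigr => x _; rewrite ffunE exprD. Qed.

Lemma ev_one : ev (done_ gT R n) = 1.
Proof. by rewrite /done_ ev_cons ev_nil addr0 rmorph1 mon0 mul1r. Qed.

Lemma ev_mul p q : ev (dmul p q) = ev p * ev q.
Proof.
rewrite /ev /dmul big_allpairs_dep /= mulr_suml; apply: eq_bigr => t _.
rewrite mulr_sumr; apply: eq_bigr => u _ /=.
by rewrite monD rmorphM mulrACA.
Qed.

Lemma ev_pow p k : ev (dpow p k) = ev p ^+ k.
Proof.
elim: k => [|k IH]; first by rewrite expr0 /dpow /= ev_one.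
by rewrite exprS -IH /dpow iterS ev_mul.
Qed.

Lemma ev_coefs p (s : seq (dmonom gT n)) : uniq s -> {subset map snd p <= s} ->
  ev p = \sum_(m <- s) j (dcoef p m) * mon m.
Proof.
move=> us sub; rewrite /dcoef.
transitivity (\sum_(m <- s) \sum_(t <- p | t.2 == m) j t.1 * mon t.2).
  rewrite (exchange_big_dep predT) //= /ev.
  rewrite [LHS]big_seq_cond [RHS]big_seq_cond; apply: eq_bigr => t /andP[tp _].
  rewrite big_const_seq.
  have -> : count (fun m => t.2 == m) s = 1%N.
    rewrite (eq_count (a2 := pred1 t.2)); last by move=> m; rewrite /= eq_sym.
    by rewrite count_uniq_mem // sub // map_f.
  by simpl; rewrite addr0.
apply: eq_bigr => m _; rewrite rmorph_sum mulr_suml; by apply: eq_bigr => t /eqP ->.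
Qed.

Lemma ev_dcoef p q : dcoef p =1 dcoef q -> ev p = ev q.
Proof.
move=> H; set s := undup (map snd (p ++ q)).
have us : uniq s by rewrite undup_uniq.
rewrite (@ev_coefs p s us); last by move=> m mp; rewrite mem_undup map_cat mem_cat mp.
rewrite (@ev_coefs q s us); last by move=> m mp; rewrite mem_undup map_cat mem_cat mp orbT.
by apply: eq_bigr => m _; rewrite H.
Qed.

Variables (actR : gT -> R -> R).
Hypothesis jeq : forall g c, j (actR g c) = actC g (j c).
Hypothesis ok : actok actC.

Lemma act0 g : actC g 0 = 0.
Proof. by apply: (addrI (actC g 0)); rewrite -(aoD ok) !addr0. Qed.
Lemma actX g x k : actC g (x ^+ k) = actC g x ^+ k.
Proof. by elim: k => [|k IH]; rewrite ?expr0 ?(ao1 ok) // !exprS (aoM ok) IH. Qed.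
Lemma act_prod g (I : Type) (r : seq I) (F : I -> C) :
  actC g (\prod_(i <- r) F i) = \prod_(i <- r) actC g (F i).
Proof. exact: (big_morph (actC g) (aoM ok g) (ao1 ok g)). Qed.
Lemma act_sum g (I : Type) (r : seq I) (F : I -> C) :
  actC g (\sum_(i <- r) F i) = \sum_(i <- r) actC g (F i).
Proof. exact: (big_morph (actC g) (aoD ok g) (act0 g)). Qed.

Lemma ev_dact g p : ev (dact actR g p) = actC g (ev p).
Proof.
rewrite /ev /dact big_map act_sum; apply: eq_bigr => t _ /=.
rewrite jeq (aoM ok); congr (_ * _).
rewrite /mon act_prod (reindex_inj (h := fun x : dvar gT n => (x.1, g * x.2)%g)) /=; last first.
  by move=> [i s] [i' s'] /= [-> /mulgI ->].
by apply: eq_bigr => -[i s] _; rewrite ffunE /= mulKg (aocomp ok) actX.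
Qed.
End Ev.


Lemma add0_of (R S : pzRingType) (f : R -> S) (fD : forall x y, f (x+y) = f x + f y) : f 0 = 0.
Proof. by apply: (addrI (f 0)); rewrite -fD !addr0. Qed.
Definition mkR (R S : pzRingType) (f : R -> S) (fD : forall x y, f (x+y) = f x + f y) (f1 : f 1 = 1) (fM : forall x y, f (x*y) = f x * f y) : {rmorphism R -> S} :=
 HB.pack f (GRing.isNmodMorphism.Build _ _ f (@add0_of _ _ f fD, fD)) (GRing.isMonoidMorphism.Build _ _ f (f1, fM)).
Lemma mkRE R S f fD f1 fM x : @mkR R S f fD f1 fM x = f x. Proof. reflexivity. Qed.

Definition FB (aT : finType) (R : comNzRingType) := {ffun aT -> R}.
HB.instance Definition _ (aT : finType) (R : comNzRingType) := GRing.PzRing.on (FB aT R).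
HB.instance Definition _ (aT : finType) (R : comNzRingType) := GRing.PzRing_hasCommutativeMul.Build (FB aT R) (@ffun_mulC aT R).

Section BSide.
Variables (gT : finGroupType) (B : comNzRingType) (actB : gT -> B -> B).
Hypothesis pfB : pseudofield actB.
Hypothesis dcB : difference_closed actB.

Lemma hB : diff_action actB. Proof. by case: pfB. Qed.
Lemma okB : actok (C := B) actB.
Proof. by case: hB => -[h1 hD hM _] [hid hc]; split. Qed.
Lemma actB_inj g : injective (actB g).
Proof. by case: hB => -[_ _ _ hb] _; apply: bij_inj. Qed.
Lemma actB0 g : actB g 0 = 0. Proof. exact: (act0 okB). Qed.
Lemma actBN g x : actB g (- x) = - actB g x.
Proof. by apply: (addrI (actB g x)); rewrite -(aoD okB) !subrr actB0. Qed.

Lemma deval_ev n (b : 'I_n -> B) p : deval actB b p = ev idfun actB b p.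
Proof. by []. Qed.

Lemma NS n (P : dpoly gT B n -> Prop) : dpoly_ideal P -> dpoly_stable actB P ->
  (forall k, ~ P (dpow (done_ gT B n) k)) ->
  exists b : 'I_n -> B, forall q, P q -> deval actB b q = 0.
Proof.
move=> Pi Ps Pn; apply: NNPP => H.
have := proj2 (dcB Pi Ps (done_ gT B n)).
case=> [a Ha|k Hk]; last exact: (Pn k).
exfalso; apply: H; exists a; exact: Ha.
Qed.

Lemma NS_model n (C : comPzRingType) (actC : gT -> C -> C) (j : {rmorphism B -> C})
  (c : 'I_n -> C) : actok actC -> (forall g x, j (actB g x) = actC g (j x)) ->
  (1 : C) != 0 ->
  exists b : 'I_n -> B, forall q, ev j actC c q = 0 -> deval actB b q = 0.
Proof.
move=> okC jeq nz.
apply: (@NS n (fun q => ev j actC c q = 0)).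
- split.
  + by move=> p q H Hp; rewrite -(ev_dcoef _ _ _ H).
  + exact: ev_nil.
  + by move=> p q Hp Hq; rewrite /dadd ev_cat Hp Hq addr0.
  + by move=> p q Hq; rewrite ev_mul Hq mulr0.
- by move=> g p Hp; rewrite /= ev_dact ?Hp ?(act0 okC).
- by move=> k; rewrite ev_pow ev_one expr1n; apply/eqP.
Qed.

Definition v1 : dvar gT 1 := (ord0, 1%g).
Definition mvar (v : dvar gT 1) (i : nat) : dmonom gT 1 := [ffun x => if x == v then i else 0%N].
Definition dvarp (v : dvar gT 1) : dpoly gT B 1 := [:: (1, mvar v 1)].
Definition dconst (c : B) : dpoly gT B 1 := [:: (c, [ffun => 0%N])].

Section EvHelp.
Variables (C : comPzRingType) (actC : gT -> C -> C) (j : {rmorphism B -> C}) (a : 'I_1 -> C).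
Lemma mon_mvar v i : mon actC a (mvar v i) = actC v.2 (a v.1) ^+ i.
Proof.
rewrite /mon (bigD1 v) //= ffunE eqxx big1 ?mulr1 // => x /negbTE xv.
by rewrite ffunE xv expr0.
Qed.
Lemma ev_var v : ev j actC a (dvarp v) = actC v.2 (a v.1).
Proof. by rewrite /dvarp ev_cons ev_nil addr0 rmorph1 mul1r mon_mvar expr1. Qed.
Lemma ev_const c : ev j actC a (dconst c) = j c.
Proof. by rewrite /dconst ev_cons ev_nil addr0 mon0 mulr1. Qed.
Lemma ev_seq (I : Type) (s : seq I) (f : I -> B) (k : I -> nat) :
  ev j actC a [seq (f i, mvar v1 (k i)) | i <- s] = \sum_(i <- s) j (f i) * actC 1%g (a ord0) ^+ k i.
Proof. by rewrite /ev big_map; apply: eq_bigr => i _; rewrite mon_mvar. Qed.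
Lemma ev_sumvar (s : seq gT) : ev j actC a (foldr (fun g acc => dadd (dvarp (ord0, g)) acc) [::] s)
  = \sum_(g <- s) actC g (a ord0).
Proof.
elim: s => [|g s IH] /=; first by rewrite ev_nil big_nil.
by rewrite ev_cons IH rmorph1 mul1r mon_mvar expr1 big_cons.
Qed.
End EvHelp.


Definition goodE (e : B) := [/\ e * e = e, forall g h, g != h -> actB g e * actB h e = 0
  & \sum_(g : gT) actB g e = 1].

Section FBops.
Let C := FB gT B.
Lemma FBmulE (f g : C) t : (f * g) t = f t * g t. Proof. by rewrite /GRing.mul /= ffunE. Qed.
Lemma FBaddE (f g : C) t : (f + g) t = f t + g t. Proof. by rewrite ffunE. Qed.
Lemma FBoneE t : (1 : C) t = 1. Proof. by rewrite /GRing.one /= ffunE. Qed.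
End FBops.

Lemma exists_good : exists e, goodE e.
Proof.
pose C := FB gT B.
pose actC (g : gT) (f : C) : C := [ffun t => f (g^-1 * t)%g].
pose jf (b : B) : C := [ffun t => actB t^-1 b].
have jD : forall x y, jf (x + y) = jf x + jf y.
  by move=> x y; apply/ffunP => t; rewrite ?FBaddE !ffunE (aoD okB).
have j1 : jf 1 = 1 by apply/ffunP => t; rewrite ?FBoneE !ffunE (ao1 okB).
have jM : forall x y, jf (x * y) = jf x * jf y.
  by move=> x y; apply/ffunP => t; rewrite FBmulE !ffunE (aoM okB).
pose jr := mkR jD j1 jM.
have okC : actok actC.
  split.
  - by move=> g; apply/ffunP => t; rewrite !ffunE ?FBoneE.
  - by move=> g x y; apply/ffunP => t; rewrite !ffunE.
  - by move=> g x y; apply/ffunP => t; rewrite !ffunE.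
  - by move=> x; apply/ffunP => t; rewrite !ffunE invg1 mul1g.
  - by move=> g h x; apply/ffunP => t; rewrite !ffunE invMg mulgA.
have jeq : forall g x, jr (actB g x) = actC g (jr x).
  by move=> g x; apply/ffunP => t; rewrite mkRE !ffunE invMg invgK -(aocomp okB).
have nz : (1 : C) != 0.
  by apply/eqP => /ffunP /(_ 1%g); rewrite ?FBoneE ffunE; apply/eqP; exact: oner_neq0.
pose c0 : 'I_1 -> C := fun _ => [ffun t => ((t == 1%g) : nat)%:R].
have [b Hb] := NS_model c0 okC jeq nz.
exists (b ord0); split.
- have := Hb (dadd (dmul (dvarp v1) (dvarp v1)) (dmul (dconst (-1)) (dvarp v1))).
  rewrite deval_ev !ev_dadd !ev_mul !ev_var !ev_const /= (aoid okB) mulN1r.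
  move=> H; apply/eqP; rewrite -subr_eq0; apply/eqP; apply: H.
  apply/ffunP => t; rewrite ?ffunE ?FBmulE ?FBaddE ?ffunE invg1 mul1g actBN (ao1 okB).
  by case: eqP => _ /=; rewrite ?mulr1n ?mulr0n ?mulr0 ?mulr1 ?addr0 ?subrr.
- move=> g h gh.
  have := Hb (dmul (dvarp (ord0, g)) (dvarp (ord0, h))).
  rewrite deval_ev !ev_mul !ev_var /=; apply.
  apply/ffunP => t; rewrite ?ffunE ?FBmulE ?ffunE -!eq_mulVg1.
  case: (eqVneq g t) => [<-|_]; last by rewrite mul0r.
  by rewrite eq_sym (negbTE gh) mulr0.
- have := Hb (dadd (foldr (fun g acc => dadd (dvarp (ord0, g)) acc) [::] (index_enum gT)) (dconst (-1))).
  rewrite deval_ev !ev_dadd !ev_sumvar !ev_const /=.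
  move=> H; apply/eqP; rewrite -subr_eq0; apply/eqP; apply: H.
  apply/ffunP => t; rewrite ?ffunE ?FBaddE sum_ffunE (bigD1 t) //= big1 => [|g gt]; last by rewrite !ffunE -eq_mulVg1 (negbTE gt).
  by rewrite !ffunE mulVg eqxx addr0 actBN (ao1 okB) subrr.
Qed.

Lemma actBM g h x : actB (g * h)%g x = actB g (actB h x). Proof. exact: (aocomp okB). Qed.
Lemma actB1 x : actB 1%g x = x. Proof. exact: (aoid okB). Qed.

Lemma good_shift e t : goodE e -> goodE (actB t e).
Proof.
case=> [idm orth sum]; split.
- by rewrite -(aoM okB) idm.
- move=> g h gh; rewrite -!actBM; apply: orth.
  by apply: contraNneq gh => /mulIg ->.
- rewrite -sum [RHS](reindex_inj (mulIg t)) /=; apply: eq_bigr => g _; by rewrite actBM.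
Qed.

Lemma good_nz e : goodE e -> e != 0.
Proof.
case=> [_ _ sum]; apply/eqP => e0; move: sum; rewrite e0 big1 => [|g _]; last exact: actB0.
by move/eqP; rewrite eq_sym oner_eq0.
Qed.

Lemma good_orth1 e g : goodE e -> g != 1%g -> e * actB g e = 0.
Proof. by case=> [_ orth _] g1; rewrite -{1}(actB1 e) orth // eq_sym. Qed.

Lemma good_primitive e f : goodE e -> f * f = f -> f * e = f -> f != 0 -> f = e.
Proof.
move=> ge ff fe fnz.
pose I := fun x => exists r : gT -> B, x = \sum_t r t * actB t f.
have Ii : ring_ideal I.
  split.
  - by exists (fun _ => 0); rewrite big1 // => t _; rewrite mul0r.
  - move=> x y [r1 ->] [r2 ->]; exists (fun t => r1 t + r2 t).
    by rewrite -big_split /=; apply: eq_bigr => t _; rewrite mulrDl.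
  - move=> r x [r1 ->]; exists (fun t => r * r1 t).
    by rewrite mulr_sumr; apply: eq_bigr => t _; rewrite mulrA.
have Is : stable_ideal actB I.
  move=> g x [r ->]; exists (fun s => actB g (r (g^-1 * s)%g)).
  rewrite (act_sum okB) [RHS](reindex_inj (mulgI g)) /=; apply: eq_bigr => t _.
  by rewrite (aoM okB) mulKg actBM.
case: pfB => _ _ /(_ I Ii Is) [I0|I1].
  exfalso; move/eqP: fnz; apply; apply: I0.
  exists (fun t => ((t == 1%g) : nat)%:R); rewrite (bigD1 1%g) //= eqxx mul1r actB1 big1 ?addr0 //.
  by move=> t /negbTE ->; rewrite mul0r.
have [r Hr] := I1 1.
have ee : e = r 1%g * (e * f).
  rewrite -{1}[e]mulr1 {1}Hr mulr_sumr (bigD1 1%g) //= big1 ?addr0.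
    by rewrite actB1 mulrCA.
  move=> t t1; rewrite -fe (aoM okB) [actB t f * _]mulrC !mulrA (mulrC e) -(mulrA (r t)) (good_orth1 ge t1) mulr0 mul0r.
  done.
have ef : e * f = e by rewrite {1}ee -mulrA -mulrA ff -ee.
by rewrite -fe mulrC.
Qed.

Lemma good_domain e x y : goodE e -> e * x * y = 0 -> e * x = 0 \/ e * y = 0.
Proof.
move=> ge exy; case: pfB => _ af _.
have [c Hc] := af (e * x).
have ee : e * e = e by case: ge.
pose f := e * x * c.
have ff : f * f = f by rewrite /f mulrACA mulrA -Hc.
have fe : f * e = f by rewrite /f mulrC !mulrA ee.
case: (eqVneq f 0) => [f0|fnz].
  left; rewrite Hc -mulrA -/f f0 mulr0 //.
right; have -> : e = f by rewrite (good_primitive ge ff fe fnz).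
by rewrite /f mulrAC exy mul0r.
Qed.

Definition aR (t : gT) : {rmorphism B -> B} := mkR (aoD okB t) (ao1 okB t) (aoM okB t).
Definition actP (t : gT) (p : {poly B}) : {poly B} := map_poly (aR t) p.

Lemma okP : actok actP.
Proof.
split.
- by move=> g; rewrite /actP rmorph1.
- by move=> g x y; rewrite /actP rmorphD.
- by move=> g x y; rewrite /actP rmorphM.
- by move=> x; rewrite /actP map_poly_id // => c _; exact: actB1.
- move=> g h x; rewrite /actP -map_poly_comp; apply: eq_map_poly => c.
  exact: actBM.
Qed.

Lemma coef_actP t p i : (actP t p)`_i = actB t p`_i.
Proof. by rewrite /actP coef_map. Qed.

Lemma good_algclosed e (g : {poly B}) : goodE e -> (forall i, e * g`_i = g`_i) ->
  lead_coef g = e -> (1 < size g)%N -> exists r, e * r = r /\ g.[r] = 0.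
Proof.
move=> ge eg lg sg.
have ee : e * e = e by case: ge.
have gek : forall i k, g`_i * e ^+ k = g`_i.
  move=> i; elim=> [|k IH]; first by rewrite expr0 mulr1.
  by rewrite exprS mulrA [g`_i * e]mulrC eg IH.
have jeq : forall t x, (polyC (actB t x) : {poly B}) = actP t x%:P.
  by move=> t x; rewrite /actP map_polyC.
pose c : 'I_1 -> {poly B} := fun _ => e%:P * 'X.
pose P := fun q : dpoly gT B 1 => forall t, exists Rp, e%:P * actP t (ev polyC actP c q) = Rp * g.
pose q0 : dpoly gT B 1 := [seq (g`_i, mvar v1 i) | i <- index_iota 0 (size g)].
have evq0 : ev polyC actP c q0 = g.
  rewrite ev_seq (aoid okP) big_mkord /c.
  under eq_bigr => i _ do rewrite exprMn -(rmorphXn polyC) mulrA -polyCM gek mul_polyC.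
  by rewrite -poly_def coefK.
have Pi : dpoly_ideal P.
  split.
  - by move=> p q H Hp t; rewrite -(ev_dcoef _ _ _ H); exact: Hp t.
  - by move=> t; exists 0; rewrite ev_nil (act0 okP) mulr0 mul0r.
  - move=> p q Hp Hq t; have [R1 H1] := Hp t; have [R2 H2] := Hq t.
    by exists (R1 + R2); rewrite ev_dadd (aoD okP) mulrDr H1 H2 mulrDl.
  - move=> p q Hq t; have [R1 H1] := Hq t.
    by exists (actP t (ev polyC actP c p) * R1); rewrite ev_mul (aoM okP) mulrCA H1 mulrA.
have Ps : dpoly_stable actB P.
  move=> g' p Hp t; have [R1 H1] := Hp (t * g')%g; exists R1.
  rewrite ev_dact; [by rewrite -(aocomp okP) | exact: jeq | exact: okP].
have Pn : forall k, ~ P (dpow (done_ gT B 1) k).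
  move=> k /(_ 1%g) [Rp]; rewrite ev_pow ev_one expr1n (ao1 okP) mulr1 => H.
  pose R' := e%:P * Rp.
  have H' : e%:P = R' * g by rewrite /R' -mulrA -H -polyCM ee.
  have enz := good_nz ge.
  case: (eqVneq R' 0) => [R0|Rnz].
    by move: H'; rewrite R0 mul0r => /eqP; rewrite polyC_eq0 (negbTE enz).
  have lR : lead_coef R' * lead_coef g = lead_coef R'.
    by rewrite lg !lead_coefE /R' coefCM mulrC mulrA ee.
  have Hs : size (R' * g) = (size R' + size g).-1.
    by apply: size_proper_mul; rewrite lR lead_coef_eq0.
  have s1 : (0 < size R')%N by rewrite size_poly_gt0.
  move: (congr1 (fun p : {poly B} => size p) H'); rewrite Hs size_polyC enz.
  move: s1 sg; case: (size R') => // a _; case: (size g) => // b0 hb.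
  rewrite addSn /= => heq.
  move: heq; rewrite addnS => -[] /esym /eqP; rewrite addn_eq0 => /andP[_ /eqP b00].
  by rewrite b00 in hb.
have [b Hb] := NS Pi Ps Pn.
have P0 : P q0.
  move=> t; rewrite evq0; case: (eqVneq t 1%g) => [->|t1].
    by exists 1; rewrite (aoid okP) mul1r; apply/polyP => i; rewrite coefCM eg.
  exists 0; rewrite mul0r; apply/polyP => i.
  by rewrite coefCM coef_actP coef0 -eg (aoM okB) mulrA (good_orth1 ge t1) mul0r.
have := Hb q0 P0; rewrite deval_ev ev_seq big_mkord actB1 => H.
exists (e * b ord0); split; first by rewrite mulrA ee.
by rewrite horner_coef -[RHS]H; apply: eq_bigr => i _; rewrite exprMn mulrA gek.
Qed.

End BSide.


Lemma ex_min_prop (Q : nat -> Prop) : (exists n, Q n) -> exists n, Q n /\ forall k, Q k -> (n <= k)%N.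
Proof.
move=> [n0 Qn0]; apply: NNPP => H.
suff : forall n k, (k <= n)%N -> ~ Q k by move/(_ n0 n0 (leqnn _)).
elim=> [|n IH] k kn Qk.
  apply: H; exists k; split=> // k' _; by move: kn; rewrite leqn0 => /eqP ->.
apply: H; exists k; split=> // k' Qk'; rewrite leqNgt; apply/negP => kk.
by apply: (IH k') => //; rewrite -ltnS (leq_trans kk kn).
Qed.

Lemma size_sub_lead (F : nzRingType) (g h : {poly F}) : size h = size g ->
  lead_coef h = lead_coef g -> (0 < size g)%N -> (size (g - h)%R < size g)%N.
Proof.
move=> sh lh sg; rewrite -[X in (_ < X)%N](prednK sg) ltnS; apply/leq_sizeP => j hj.
rewrite coefB; case: (ltngtP j (size g)) => [jlt|jgt|->].
- have: j = (size g).-1 by apply/eqP; rewrite eqn_leq hj andbT -ltnS prednK.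
  by move=> ->; rewrite -lead_coefE -sh -lead_coefE lh subrr.
- by rewrite !nth_default ?subrr // ?sh // ltnW.
- by rewrite !nth_default ?subrr // ?sh.
Qed.

Section Ext.
Variables (A B : comNzRingType) (L : closedFieldType).
Variables (phi : {rmorphism A -> L}) (iota : {rmorphism A -> B}) (e : B).
Hypothesis ee : e * e = e.
Hypothesis enz : e != 0.
Hypothesis Hker : forall a, phi a = 0 -> e * iota a = 0.
Hypothesis Hinv : forall a, phi a != 0 -> exists a', phi a * phi a' = 1.
Hypothesis alg_L : forall x : L, exists p : {poly L},
  [/\ p != 0, forall i, exists a, p`_i = phi a & root p x].
Hypothesis Hcl : forall g : {poly B}, (forall i, e * g`_i = g`_i) ->
  lead_coef g = e -> (1 < size g)%N -> exists r, e * r = r /\ g.[r] = 0.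

Record PE := MkPE { dom : L -> Prop; fn : L -> B;
  dom_phi : forall a, dom (phi a);
  fn_phi : forall a, fn (phi a) = e * iota a;
  dom_add : forall x y, dom x -> dom y -> dom (x + y);
  dom_mul : forall x y, dom x -> dom y -> dom (x * y);
  dom_opp : forall x, dom x -> dom (- x);
  fn_add : forall x y, dom x -> dom y -> fn (x + y) = fn x + fn y;
  fn_mul : forall x y, dom x -> dom y -> fn (x * y) = fn x * fn y }.

Section PEfacts.
Variable p : PE.
Let K := dom p.
Let chi := fn p.

Lemma K0 : K 0. Proof. by rewrite -(rmorph0 phi); apply: dom_phi. Qed.
Lemma K1 : K 1. Proof. by rewrite -(rmorph1 phi); apply: dom_phi. Qed.
Lemma Ksub x y : K x -> K y -> K (x - y).
Proof. by move=> Kx Ky; apply: dom_add => //; apply: dom_opp. Qed.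
Lemma Ksum (I : Type) (s : seq I) (F : I -> L) : (forall i, K (F i)) -> K (\sum_(i <- s) F i).
Proof. move=> KF; elim: s => [|i s IH]; first by rewrite big_nil; exact: K0.
by rewrite big_cons; apply: dom_add; [apply: KF|]. Qed.
Lemma Kexp y k : K y -> K (y ^+ k).
Proof. move=> Ky; elim: k => [|k IH]; first by rewrite expr0; exact: K1.
by rewrite exprS; apply: dom_mul. Qed.
Lemma Knat (b : bool) : K (b%:R).
Proof. by case: b; [exact: K1|exact: K0]. Qed.

Lemma fn0 : chi 0 = 0.
Proof. by rewrite /chi -(rmorph0 phi) fn_phi rmorph0 mulr0. Qed.
Lemma fn1 : chi 1 = e.
Proof. by rewrite /chi -(rmorph1 phi) fn_phi rmorph1 mulr1. Qed.
Lemma fnN x : K x -> chi (- x) = - chi x.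
Proof.
move=> Kx; apply: (addrI (chi x)); rewrite /chi -fn_add //; last exact: dom_opp.
by rewrite !subrr -/chi fn0.
Qed.
Lemma fnB x y : K x -> K y -> chi (x - y) = chi x - chi y.
Proof. by move=> Kx Ky; rewrite /chi fn_add //; [rewrite -/chi fnN|apply: dom_opp]. Qed.
Lemma fn_sum (I : Type) (s : seq I) (F : I -> L) : (forall i, K (F i)) ->
  chi (\sum_(i <- s) F i) = \sum_(i <- s) chi (F i).
Proof.
move=> KF; elim: s => [|i s IH]; first by rewrite !big_nil fn0.
rewrite !big_cons /chi fn_add; [by rewrite -/chi IH | exact: KF | exact: Ksum].
Qed.
Lemma fn_e x : K x -> e * chi x = chi x.
Proof. by move=> Kx; rewrite -fn1 mulrC /chi -fn_mul ?mulr1 //; exact: K1. Qed.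

Definition Kpoly (g : {poly L}) := forall i, K g`_i.

Lemma Kpoly_horner g y : Kpoly g -> K y -> K g.[y].
Proof.
move=> Kg Ky; rewrite horner_coef; apply: Ksum => i.
by apply: dom_mul; [apply: Kg|apply: Kexp].
Qed.

Lemma Kinv y : K y -> y != 0 -> K y^-1.
Proof.
move=> Ky ynz.
pose Q n := exists f : {poly L}, [/\ f != 0, forall i, exists a, f`_i = phi a, root f y & size f = n].
have exQ : exists n, Q n.
  by have [f [fnz fph fr]] := alg_L y; exists (size f), f.
have [n [[f [fnz fph fr sf]] minf]] := ex_min_prop exQ.
pose f' := drop_poly 1 f.
have tk : take_poly 1 f = (f`_0)%:P.
  by apply/polyP => i; rewrite coef_take_poly coefC; case: i.
have fdec : f = f' * 'X + (f`_0)%:P by rewrite -[f in LHS](poly_take_drop 1) tk addrC expr1.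
have f'ph : forall i, exists a, f'`_i = phi a by move=> i; rewrite coef_drop_poly; apply: fph.
have f00 : f`_0 != 0.
  apply/negP => /eqP f00.
  have f'nz : f' != 0 by apply: contraNneq fnz => f'0; rewrite fdec f'0 f00 mul0r add0r.
  have rf' : root f' y.
    move: fr; rewrite /root {1}fdec f00 addr0 hornerMX mulf_eq0 (negbTE ynz) orbF //.
  have := minf (size f') (ex_intro _ f' (And4 f'nz f'ph rf' erefl)).
  by rewrite -sf fdec f00 addr0 size_mulX // ltnn.
have [a0 Ha0] := fph 0.
have [a' Ha'] : exists a', phi a0 * phi a' = 1 by apply: Hinv; rewrite -Ha0.
have Kf' : K f'.[y].
  by apply: Kpoly_horner => // i; have [a ->] := f'ph i; apply: dom_phi.
have yz : y * (- phi a' * f'.[y]) = 1.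
  move: fr; rewrite /root {1}fdec hornerMXaddC => /eqP H.
  have : f'.[y] * y = - f`_0 by apply/eqP; rewrite -subr_eq0 opprK H.
  by move=> H2; rewrite mulrCA [y * _]mulrC H2 mulrNN Ha0 mulrC Ha'.
have -> : y^-1 = - phi a' * f'.[y].
  by rewrite -[RHS]mul1r -(mulVf ynz) -mulrA yz mulr1.
apply: dom_mul => //; apply: dom_opp; exact: dom_phi.
Qed.

Lemma KpolyD g h : Kpoly g -> Kpoly h -> Kpoly (g + h).
Proof. by move=> Kg Kh i; rewrite coefD; apply: dom_add; [exact: Kg|exact: Kh]. Qed.
Lemma KpolyN g : Kpoly g -> Kpoly (- g).
Proof. by move=> Kg i; rewrite coefN; apply: dom_opp; exact: Kg. Qed.
Lemma KpolyB g h : Kpoly g -> Kpoly h -> Kpoly (g - h).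
Proof. by move=> Kg Kh; apply: KpolyD => //; apply: KpolyN. Qed.
Lemma KpolyM g h : Kpoly g -> Kpoly h -> Kpoly (g * h).
Proof. by move=> Kg Kh i; rewrite coefM; apply: Ksum => j; apply: dom_mul; [exact: Kg|exact: Kh]. Qed.
Lemma KpolyC c : K c -> Kpoly c%:P.
Proof. by move=> Kc i; rewrite coefC; case: (i == 0)%N => //; exact: K0. Qed.
Lemma KpolyX : Kpoly 'X.
Proof. by move=> i; rewrite coefX; apply: Knat. Qed.
Lemma KpolyZ c g : K c -> Kpoly g -> Kpoly (c *: g).
Proof. by move=> Kc Kg i; rewrite coefZ; apply: dom_mul; [|exact: Kg]. Qed.
Lemma KpolyXnM d g : Kpoly g -> Kpoly ('X^d * g).
Proof. by move=> Kg i; rewrite coefXnM; case: ifP => _; [exact: K0|exact: Kg]. Qed.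

Definition Ep (g : {poly L}) : {poly B} := map_poly chi g.
Lemma coefEp g i : (Ep g)`_i = chi g`_i.
Proof. exact: (coef_map_id0 _ _ fn0). Qed.
Lemma Ep_add g h : Kpoly g -> Kpoly h -> Ep (g + h) = Ep g + Ep h.
Proof. by move=> Kg Kh; apply/polyP => i; rewrite coefD !coefEp coefD /chi fn_add; [|exact: Kg|exact: Kh]. Qed.
Lemma Ep_sub g h : Kpoly g -> Kpoly h -> Ep (g - h) = Ep g - Ep h.
Proof. by move=> Kg Kh; apply/polyP => i; rewrite coefB !coefEp coefB fnB; [|exact: Kg|exact: Kh]. Qed.
Lemma Ep_mul g h : Kpoly g -> Kpoly h -> Ep (g * h) = Ep g * Ep h.
Proof.
move=> Kg Kh; apply/polyP => i; rewrite coefEp !coefM fn_sum; last first.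
  by move=> j; apply: dom_mul; [exact: Kg|exact: Kh].
by apply: eq_bigr => j _; rewrite !coefEp /chi fn_mul; [|exact: Kg|exact: Kh].
Qed.
Lemma Ep_C c : Ep c%:P = (chi c)%:P.
Proof. by apply/polyP => i; rewrite coefEp !coefC; case: (i == 0)%N; rewrite ?fn0. Qed.
Lemma Ep_ZXnM c d g : K c -> Kpoly g -> Ep (c *: ('X^d * g)) = chi c *: ('X^d * Ep g).
Proof.
move=> Kc Kg; apply/polyP => i; rewrite coefEp !coefZ !coefXnM.
case: ifP => _; first by rewrite mulr0 fn0 mulr0.
by rewrite coefEp /chi fn_mul; [|exact: Kc|exact: Kg].
Qed.

End PEfacts.
Definition Rle (p q : PE) := (forall x, dom p x -> dom q x) /\ (forall x, dom p x -> fn q x = fn p x).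

Lemma extend p x : exists p', Rle p p' /\ dom p' x.
Proof.
pose K := dom p. pose chi := fn p.
pose Q n := exists g, [/\ g != 0, Kpoly p g, root g x & size g = n].
have exQ : exists n, Q n.
  have [f [fnz fph fr]] := alg_L x; exists (size f), f; split=> // i.
  by have [a ->] := fph i; apply: dom_phi.
have [n [[mu0 [nz0 Kmu0 rmu0 smu0]] minmu]] := ex_min_prop exQ.
pose c := lead_coef mu0.
have cnz : c != 0 by rewrite lead_coef_eq0.
have Kc : K c by rewrite /c lead_coefE; apply: Kmu0.
pose mu := c^-1 *: mu0.
have Kmu : Kpoly p mu by apply: KpolyZ => //; apply: Kinv.
have lmu : lead_coef mu = 1 by rewrite lead_coefZ mulVf.
have rmu : root mu x by rewrite /root hornerZ (rootP rmu0) mulr0.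
have smu : size mu = n by rewrite size_scale ?invr_eq0.
have minmu' : forall g, Kpoly p g -> g != 0 -> root g x -> (n <= size g)%N.
  by move=> g Kg gnz rg; apply: minmu; exists g.
have s2 : (1 < n)%N.
  rewrite ltnNge; apply/negP => sn.
  have mu1 : mu = (mu`_0)%:P by apply: size1_polyC; rewrite smu.
  have h0 : mu`_0 = 1 by rewrite -lmu {2}mu1 lead_coefC.
  by move: rmu; rewrite /root mu1 hornerC h0 oner_eq0.
pose Emu := Ep p mu.
have eEmu : forall i, e * Emu`_i = Emu`_i by move=> i; rewrite /Emu coefEp fn_e.
have lEmu : lead_coef Emu = e.
  by rewrite /Emu /Ep lead_coef_map_id0 ?fn0 // lmu fn1.
have sEmu : size Emu = n by rewrite /Emu /Ep size_map_poly_id0 // lmu fn1.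
have [r [er rr]] : exists r, e * r = r /\ Emu.[r] = 0 by apply: Hcl => //; rewrite sEmu.
have WD : forall g, Kpoly p g -> root g x -> (Ep p g).[r] = 0.
  suff H : forall k (g : {poly L}), (size g <= k)%N -> Kpoly p g -> root g x -> (Ep p g).[r] = 0.
    by move=> g; apply: H (leqnn _).
  elim=> [|k IH] g sg Kg rg.
    by move: sg; rewrite leqn0 size_poly_eq0 => /eqP ->; rewrite /Ep map_poly0 horner0.
  case: (eqVneq g 0) => [->|gnz]; first by rewrite /Ep map_poly0 horner0.
  have ng := minmu' g Kg gnz rg.
  pose d := (size g - n)%N.
  pose lc := lead_coef g.
  have Klc : K lc by rewrite /lc lead_coefE; apply: Kg.
  pose h := lc *: ('X^d * mu).
  have Kh : Kpoly p h by apply: KpolyZ => //; apply: KpolyXnM.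
  have sh : size h = size g.
    by rewrite size_scale ?lead_coef_eq0 // mulrC size_mulXn ?smu /d ?subnK // -size_poly_eq0 smu -lt0n ltnW.
  have lh : lead_coef h = lc by rewrite lead_coefZ lead_coefM lead_coefXn lmu !mulr1.
  have sg' : (size (g - h)%R <= k)%N.
    by rewrite -ltnS (leq_trans _ sg) // size_sub_lead // lt0n size_poly_eq0.
  have Kg' : Kpoly p (g - h) by apply: KpolyB.
  have rg' : root (g - h) x.
    by rewrite /root hornerD hornerN /h hornerZ hornerM (rootP rmu) (rootP rg) !mulr0 subrr.
  have := IH _ sg' Kg' rg'.
  by rewrite Ep_sub // hornerD hornerN /h Ep_ZXnM // hornerZ hornerM -/Emu rr !mulr0 subr0.
pose dom' := fun y => exists g, Kpoly p g /\ y = g.[x].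
have inhP : inhabited {poly L} := inhabits 0.
pose fn' := fun y => (Ep p (epsilon inhP (fun g => Kpoly p g /\ y = g.[x]))).[r].
have key : forall g, Kpoly p g -> fn' g.[x] = (Ep p g).[r].
  move=> g Kg; rewrite /fn'.
  have [Kgc Hgc] := epsilon_spec inhP (fun g0 => Kpoly p g0 /\ g.[x] = g0.[x]) (ex_intro _ g (conj Kg erefl)).
  set gc := epsilon _ _ in Kgc Hgc *.
  have rgc : root (g - gc) x by rewrite /root hornerD hornerN Hgc subrr.
  have := WD (g - gc) (KpolyB Kg Kgc) rgc.
  by rewrite Ep_sub // hornerD hornerN => /eqP; rewrite subr_eq0 => /eqP ->.
have d_phi : forall a, dom' (phi a).
  by move=> a; exists (phi a)%:P; rewrite hornerC; split => //; apply: KpolyC; apply: dom_phi.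
have f_phi : forall a, fn' (phi a) = e * iota a.
  move=> a; have -> : phi a = ((phi a)%:P).[x] by rewrite hornerC.
  by rewrite key ?Ep_C ?hornerC ?fn_phi //; apply: KpolyC; apply: dom_phi.
have d_add : forall y z, dom' y -> dom' z -> dom' (y + z).
  by move=> y z [g [Kg ->]] [h [Kh ->]]; exists (g + h); rewrite hornerD; split => //; apply: KpolyD.
have d_mul : forall y z, dom' y -> dom' z -> dom' (y * z).
  by move=> y z [g [Kg ->]] [h [Kh ->]]; exists (g * h); rewrite hornerM; split => //; apply: KpolyM.
have d_opp : forall y, dom' y -> dom' (- y).
  by move=> y [g [Kg ->]]; exists (- g); rewrite hornerN; split => //; apply: KpolyN.
have f_add : forall y z, dom' y -> dom' z -> fn' (y + z) = fn' y + fn' z.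
  move=> y z [g [Kg ->]] [h [Kh ->]].
  by rewrite -hornerD (key _ (KpolyD Kg Kh)) (key _ Kg) (key _ Kh) (Ep_add Kg Kh) hornerD.
have f_mul : forall y z, dom' y -> dom' z -> fn' (y * z) = fn' y * fn' z.
  move=> y z [g [Kg ->]] [h [Kh ->]].
  by rewrite -hornerM (key _ (KpolyM Kg Kh)) (key _ Kg) (key _ Kh) (Ep_mul Kg Kh) hornerM.
exists (MkPE d_phi f_phi d_add d_mul d_opp f_add f_mul); split; last first.
  by exists 'X; rewrite hornerX; split => //; apply: KpolyX.
split => y Ky /=.
  by exists y%:P; rewrite hornerC; split => //; apply: KpolyC.
have -> : y = (y%:P).[x] by rewrite hornerC.
by rewrite key ?Ep_C ?hornerC //; apply: KpolyC.
Qed.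

Lemma Rle_refl p : Rle p p. Proof. by split. Qed.
Lemma Rle_trans p q s : Rle p q -> Rle q s -> Rle p s.
Proof.
move=> [d1 f1] [d2 f2]; split=> x Hx; first by apply: d2; apply: d1.
by rewrite f2 ?f1 //; apply: d1.
Qed.

Lemma phi_wd a b : phi a = phi b -> e * iota a = e * iota b.
Proof.
move=> H; apply/eqP; rewrite -subr_eq0 -mulrBr -rmorphB; apply/eqP; apply: Hker.
by rewrite rmorphB H subrr.
Qed.

Definition inhA : inhabited A := inhabits 0.
Definition dom0 (x : L) := exists a, x = phi a.
Definition fn0' (x : L) := e * iota (epsilon inhA (fun a => x = phi a)).
Lemma fn0'_phi a : fn0' (phi a) = e * iota a.
Proof.
rewrite /fn0'; apply: phi_wd.
by rewrite -(epsilon_spec inhA (fun b => phi a = phi b) (ex_intro _ a erefl)).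
Qed.

Lemma p0_ex : exists p0 : PE, forall q, Rle p0 q.
Proof.
have d_phi : forall a, dom0 (phi a) by move=> a; exists a.
have d_add : forall x y, dom0 x -> dom0 y -> dom0 (x + y).
  by move=> x y [a ->] [b ->]; exists (a + b); rewrite rmorphD.
have d_mul : forall x y, dom0 x -> dom0 y -> dom0 (x * y).
  by move=> x y [a ->] [b ->]; exists (a * b); rewrite rmorphM.
have d_opp : forall x, dom0 x -> dom0 (- x).
  by move=> x [a ->]; exists (- a); rewrite rmorphN.
have f_add : forall x y, dom0 x -> dom0 y -> fn0' (x + y) = fn0' x + fn0' y.
  by move=> x y [a ->] [b ->]; rewrite -rmorphD !fn0'_phi rmorphD mulrDr.
have f_mul : forall x y, dom0 x -> dom0 y -> fn0' (x * y) = fn0' x * fn0' y.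
  by move=> x y [a ->] [b ->]; rewrite -rmorphM !fn0'_phi rmorphM mulrACA ee.
exists (MkPE d_phi fn0'_phi d_add d_mul d_opp f_add f_mul) => q; split.
  by move=> x [a ->]; apply: dom_phi.
by move=> x [a ->] /=; rewrite fn_phi fn0'_phi.
Qed.

Lemma total_chi : exists chi : L -> B, [/\ forall x y, chi (x + y) = chi x + chi y,
  forall x y, chi (x * y) = chi x * chi y & forall a, chi (phi a) = e * iota a].
Proof.
have [p0 p0l] := p0_ex.
have inhPE : inhabited PE := inhabits p0.
have ub : forall C, @ZornM.chainP PE Rle C -> exists u, forall q, C q -> Rle q u.
  move=> C0 ch0; pose C := fun q => C0 q \/ q = p0.
  have ch : @ZornM.chainP PE Rle C.
    move=> q1 q2 [H1| ->] [H2| ->]; [exact: ch0| |left; exact: p0l|left; exact: Rle_refl].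
    right; exact: p0l.
  pose domU x := exists q, C q /\ dom q x.
  pose fnU x := fn (epsilon inhPE (fun q => C q /\ dom q x)) x.
  have fnU_spec : forall q x, C q -> dom q x -> fnU x = fn q x.
    move=> q x Cq dqx; rewrite /fnU.
    have [Cq' dq'] := epsilon_spec inhPE (fun q => C q /\ dom q x) (ex_intro _ q (conj Cq dqx)).
    set q' := epsilon _ _ in Cq' dq' *.
    by case: (ch q q' Cq Cq') => -[_ H]; [rewrite H | rewrite -H].
  have common : forall x y, domU x -> domU y -> exists q, [/\ C q, dom q x & dom q y].
    move=> x y [q1 [C1 d1]] [q2 [C2 d2]].
    case: (ch q1 q2 C1 C2) => -[H _]; [exists q2; split=> //; exact: H|exists q1; split=> //; exact: H].
  have d_phi : forall a, domU (phi a) by move=> a; exists p0; split; [right|apply: dom_phi].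
  have f_phi : forall a, fnU (phi a) = e * iota a.
    by move=> a; rewrite (fnU_spec p0) ?fn_phi //; [right|apply: dom_phi].
  have d_add : forall x y, domU x -> domU y -> domU (x + y).
    by move=> x y dx dy; have [q [Cq ? ?]] := common x y dx dy; exists q; split=> //; apply: dom_add.
  have d_mul : forall x y, domU x -> domU y -> domU (x * y).
    by move=> x y dx dy; have [q [Cq ? ?]] := common x y dx dy; exists q; split=> //; apply: dom_mul.
  have d_opp : forall x, domU x -> domU (- x).
    by move=> x [q [Cq dq]]; exists q; split=> //; apply: dom_opp.
  have f_add : forall x y, domU x -> domU y -> fnU (x + y) = fnU x + fnU y.
    move=> x y dx dy; have [q [Cq qx qy]] := common x y dx dy.
    by rewrite !(fnU_spec q) ?fn_add //; apply: dom_add.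
  have f_mul : forall x y, domU x -> domU y -> fnU (x * y) = fnU x * fnU y.
    move=> x y dx dy; have [q [Cq qx qy]] := common x y dx dy.
    by rewrite !(fnU_spec q) ?fn_mul //; apply: dom_mul.
  exists (MkPE d_phi f_phi d_add d_mul d_opp f_add f_mul) => q Cq; split => /=.
    by move=> x dx; exists q; split=> //; left.
  by move=> x dx; apply: fnU_spec => //; left.
have [M HM] := @ZornM.zorn PE Rle Rle_refl Rle_trans ub inhPE.
have full : forall x, dom M x.
  by move=> x; have [p' [Mp' dx]] := extend M x; have [H _] := HM p' Mp'; apply: H.
exists (fn M); split.
- by move=> x y; apply: fn_add.
- by move=> x y; apply: fn_mul.
- exact: fn_phi.
Qed.

End Ext.


Unset Implicit Arguments.

Theorem proposition4p15 (gT : finGroupType) (A B : comNzRingType)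
    (L : closedFieldType)
    (actA : gT -> A -> A) (actB : gT -> B -> B)
    (pfA : pseudofield actA)
    (m : A -> Prop) (hm : maximal_ideal m)
    (phi : {rmorphism A -> L}) (ker_phi : forall a, phi a = 0 <-> m a)
    (alg_L : forall x : L, exists p : {poly L},
        [/\ p != 0, forall i, exists a, p`_i = phi a & root p x])
    (pfB : pseudofield actB) (dcB : difference_closed actB)
    (iota : {rmorphism A -> B}) (iota_inj : injective iota)
    (iota_diff : forall g a, iota (actA g a) = actB g (iota a)) :
  exists psi : {rmorphism {ffun gT -> L} -> B},
    [/\ injective psi,
        forall g f, psi (funact g f) = actB g (psi f) &
        forall a, psi (taylor phi actA a) = iota a].
Proof.
have [e0 ge0] := exists_good pfB dcB.
have [hmi hm1 hmmax] := hm.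
have [hm0 hmD hmM] := hmi.
have [tau Htau] : exists tau, forall a, actB tau e0 * iota a = 0 -> m a.
  apply: NNPP => H.
  have H' : forall t, exists a, actB t e0 * iota a = 0 /\ ~ m a.
    move=> t; apply: NNPP => H2; apply: H; exists t => a Ha; apply: NNPP => Hm.
    by apply: H2; exists a.
  pose f t := proj1_sig (constructive_indefinite_description _ (H' t)).
  have fP : forall t, actB t e0 * iota (f t) = 0 /\ ~ m (f t).
    by move=> t; rewrite /f; case: constructive_indefinite_description.
  pose a := \prod_(t : gT) f t.
  have pa : phi a != 0.
    rewrite rmorph_prod; apply/prodf_neq0 => t _; apply/eqP => /ker_phi.
    exact: (proj2 (fP t)).
  have ia : iota a = 0.
    case: ge0 => _ _ sum.
    rewrite -[iota a]mul1r -sum mulr_suml big1 // => s _.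
    rewrite /a rmorph_prod (bigD1 s) //= mulrA (proj1 (fP s)) mul0r //.
  move/eqP: pa; apply; have -> : a = 0 by apply: iota_inj; rewrite ia rmorph0.
  by rewrite rmorph0.
pose e := actB tau e0.
have ok := @okB gT B actB pfB.
have ge : goodE actB e by apply: good_shift.
have ee : e * e = e by case: ge.
have enz : e != 0 by apply: good_nz ge.
have [_ afA _] := pfA.
have Hker : forall a, phi a = 0 -> e * iota a = 0.
  move=> a /ker_phi ma; apply: NNPP => ne.
  have [c Hc] := afA a.
  have : e * iota a * iota (1 - a * c) = 0.
    by rewrite -mulrA -rmorphM mulrBr mulr1 mulrA -Hc subrr rmorph0 mulr0.
  case/(good_domain pfB ge) => [//|H1].
  have m1 : m (1 - a * c) := Htau _ H1.
  have mac : m (a * c) by rewrite mulrC; apply: hmM.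
  by apply: hm1; have := hmD _ _ m1 mac; rewrite subrK.
have Hinv : forall a, phi a != 0 -> exists a', phi a * phi a' = 1.
  move=> a pa; have nma : ~ m a by move=> ma; move/eqP: pa; apply; apply/ker_phi.
  pose J z := exists u r, m u /\ z = u + r * a.
  have Ji : ring_ideal J.
    split.
    - by exists 0, 0; rewrite mul0r addr0.
    - move=> x y [u1 [r1 [m1 ->]]] [u2 [r2 [m2 ->]]]; exists (u1 + u2), (r1 + r2).
      by split; [apply: hmD|rewrite mulrDl addrACA].
    - move=> r x [u [r1 [mu ->]]]; exists (r * u), (r * r1).
      by split; [apply: hmM|rewrite mulrDr mulrA].
  have mJ : forall x, m x -> J x by move=> x mx; exists x, 0; rewrite mul0r addr0.
  case: (hmmax J Ji mJ) => [Jm|Jall].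
    by exfalso; apply: nma; apply: Jm; exists 0, 1; rewrite add0r mul1r.
  have [u [r [mu H1]]] := Jall 1.
  exists r; have := congr1 phi H1.
  by rewrite rmorph1 rmorphD rmorphM (proj2 (ker_phi u) mu) add0r mulrC => <-.
have Hcl : forall g : {poly B}, (forall i, e * g`_i = g`_i) ->
    lead_coef g = e -> (1 < size g)%N -> exists r, e * r = r /\ g.[r] = 0.
  by move=> g; apply: (good_algclosed pfB dcB ge).
have [chi [chiD chiM chiphi]] := total_chi ee enz Hker Hinv alg_L Hcl.
have chi0 : chi 0 = 0 by apply: (addrI (chi 0)); rewrite -chiD !addr0.
have chi1 : chi 1 = e by rewrite -(rmorph1 phi) chiphi rmorph1 mulr1.
have chie : forall x, e * chi x = chi x by move=> x; rewrite -chi1 mulrC -chiM mulr1.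
have [_ orth sum] := ge.
have act_chi : forall t x, actB t e * actB t (chi x) = actB t (chi x).
  by move=> t x; rewrite -(aoM ok) chie.
have crossE : forall t s y, t != s -> actB t e * actB s (chi y) = 0.
  by move=> t s y ts; rewrite -(act_chi s y) mulrA orth // mul0r.
have cross : forall t s x y, t != s -> actB t (chi x) * actB s (chi y) = 0.
  by move=> t s x y ts; rewrite -(act_chi t x) -mulrA mulrCA crossE // mulr0.
pose psif (f : {ffun gT -> L}) := \sum_(t : gT) actB t (chi (f t)).
have psiD : forall f g, psif (f + g) = psif f + psif g.
  by move=> f g; rewrite /psif -big_split; apply: eq_bigr => t _; rewrite ffunE chiD (aoD ok).
have psi1 : psif 1 = 1.
  by rewrite /psif -sum; apply: eq_bigr => t _; rewrite ffunE chi1.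
have psiM : forall f g, psif (f * g) = psif f * psif g.
  move=> f g; rewrite /psif mulr_suml; apply: eq_bigr => t _.
  rewrite mulr_sumr (bigD1 t) //= big1 ?addr0 => [|s st]; last by rewrite cross // eq_sym.
  by rewrite ffunE chiM (aoM ok).
pose psi := mkR psiD psi1 psiM.
have proj : forall t f, actB t e * psi f = actB t (chi (f t)).
  move=> t f; rewrite mkRE /psif mulr_sumr (bigD1 t) //= big1 ?addr0 => [|s st].
    exact: act_chi.
  by rewrite crossE // eq_sym.
exists psi; split.
- move=> f g H.
  have H0 : psi (f - g) = 0 by rewrite rmorphB H subrr.
  apply/ffunP => t; apply/eqP; rewrite -subr_eq0; apply/eqP.
  have := proj t (f - g); rewrite H0 mulr0 => /esym.
  rewrite -(actB0 pfB t) => /(actB_inj pfB) hz.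
  apply: NNPP => nz; move/eqP: enz; apply.
  have nz' : (f - g) t != 0 by rewrite !ffunE; apply/eqP.
  by rewrite -chi1 -(mulfV nz') chiM hz mul0r.
- move=> g f; rewrite !mkRE /psif (act_sum ok) [LHS](reindex_inj (mulgI g)) /=.
  by apply: eq_bigr => t _; rewrite ffunE mulKg (aocomp ok).
- move=> a; rewrite mkRE /psif -[RHS]mul1r -sum mulr_suml; apply: eq_bigr => t _.
  by rewrite ffunE chiphi iota_diff (aoM ok) -(aocomp ok) mulgV (aoid ok).
Qed.
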